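(* Let $G=(V,E,w)$ be a weighted graph, $\alpha\geq 1$, $\beta\geq 0$, and consider an iteration of the $(\alpha,\beta)$-completion algorithm in which the current subgraph is $H\subseteq G$, the chosen pair is $(x,y)$ (so $\mathrm{dist}_H(x,y)>\alpha\,\mathrm{dist}_G(x,y)+\beta W_{\max}(G)$), $P_{x,y}=(x=x_0,x_1,\ldots,x_t=y)$ is the chosen shortest $x$–$y$ path in $G$, and $\mathcal{S}=([i_0,i_1],[i_1,i_2],\ldots,[i_{s-1},i_s])$ is the chosen minimal $\alpha$-segmentation of $P_{x,y}$ with respect to $H$. Let $H'=H\cup E_\alpha(\mathcal{S},H)$. Then for any $0\leq \ell<r\leq s$, \[ \mathrm{dist}_{H'}(x_{i_\ell},x_{i_r})\leq \alpha\cdot \mathrm{dist}_G(x_{i_\ell},x_{i_r}). \]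
   Context: $G$ is an undirected graph with positive edge weights $w$, in which every edge is a shortest path between its endpoints. $\mathrm{dist}_X$ is the weighted shortest-path distance in a graph $X$, and $W_{\max}(G)$ is the maximum edge weight of $G$. For a shortest path $P_{x,y}=(x_0,\ldots,x_t)$ in $G$ and a subgraph $H\subseteq G$, an $\alpha$-segmentation of $P_{x,y}$ (w.r.t. $H$) is a sequence of index intervals $([i_0,i_1],\ldots,[i_{s-1},i_s])$ with $0=i_0<i_1<\cdots<i_s=t$ such that every segment with $i_j-i_{j-1}\geq 2$ satisfies $\mathrm{dist}_H(x_{i_{j-1}},x_{i_j})\leq \alpha\,\mathrm{dist}_G(x_{i_{j-1}},x_{i_j})$. It is minimal if no consecutive sequence of its segments can be merged into one segment so as to produce another $\alpha$-segmentation of the same path. $E(\mathcal{S})$ is the set of edges $\{x_{i_{j-1}},x_{i_j}\}$ corresponding to segments with $i_j-i_{j-1}=1$, and $E_\alpha(\mathcal{S},H)=\{e=\{u,v\}\in E(\mathcal{S}) : \mathrm{dist}_H(u,v)>\alpha\, w(e)\}$. The $(\alpha,\beta)$-completion algorithm starts from an initial subgraph $H\gets H_0\subseteq G$ and, while there exist $x,y$ with $\mathrm{dist}_H(x,y)>\alpha\,\mathrm{dist}_G(x,y)+\beta W_{\max}(G)$, picks such a pair, takes a shortest $x$–$y$ path $P_{x,y}$ in $G$, finds a minimal $\alpha$-segmentation $\mathcal{S}$ of $P_{x,y}$ w.r.t. the current $H$, and updates $H\gets H\cup E_\alpha(\mathcal{S},H)$. *)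

(* Defs.v *)
From HB Require Import structures.
From mathcomp Require Import all_boot all_order all_algebra.
From mathcomp Require Import boolp classical_sets reals constructive_ereal ereal.
Set Implicit Arguments.
Unset Strict Implicit.
Unset Printing Implicit Defensive.
Import Order.TTheory GRing.Theory Num.Theory.
Local Open Scope ring_scope.
Local Open Scope classical_set_scope.

(* A weighted graph on a finite vertex type T is given by a symmetric edge
   relation e and a weight function w (only its values on edges matter).
   A walk from u is a sequence p of further vertices with path e u p. *)

Fixpoint wweight (T : Type) (R : numDomainType) (w : T -> T -> R)
    (u : T) (p : seq T) : R :=
  if p is v :: q then w u v + wweight w v q else 0.

(* weighted shortest-path distance (+oo if v is unreachable from u) *)
Definition dist (T : eqType) (R : realType) (e : rel T) (w : T -> T -> R)
    (u v : T) : \bar R :=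
  ereal_inf [set (wweight w u p)%:E | p in [set p | path e u p /\ last u p = v]].

Definition Wmax (T : finType) (R : realDomainType) (e : rel T)
    (w : T -> T -> R) : R :=
  \big[Num.max/0]_(u : T) \big[Num.max/0]_(v : T | e u v) w u v.

(* The path P = (x_0, ..., x_t) is represented by xs : nat -> T and t.
   A segmentation ([i_0,i_1],...,[i_{s-1},i_s]) is the index list
   I = [:: i_0; ...; i_s], so s = (size I).-1. *)
Definition is_alpha_seg (T : finType) (R : realType) (eG eH : rel T)
    (w : T -> T -> R) (alpha : R) (xs : nat -> T) (t : nat) (I : seq nat) : Prop :=
  [/\ I != [::], nth 0%N I 0 = 0%N, last 0%N I = t, sorted ltn I &
      forall j, (j.+1 < size I)%N -> (nth 0%N I j + 2 <= nth 0%N I j.+1)%N ->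
        (dist eH w (xs (nth 0%N I j)) (xs (nth 0%N I j.+1))
          <= alpha%:E * dist eG w (xs (nth 0%N I j)) (xs (nth 0%N I j.+1)))%E].

(* merging the consecutive segments l+1, ..., r (i.e. [i_l, i_r]) *)
Definition merge_segs (I : seq nat) (l r : nat) : seq nat :=
  take l.+1 I ++ drop r I.

Definition is_minimal_alpha_seg (T : finType) (R : realType) (eG eH : rel T)
    (w : T -> T -> R) (alpha : R) (xs : nat -> T) (t : nat) (I : seq nat) : Prop :=
  is_alpha_seg eG eH w alpha xs t I /\
  forall l r, (l.+1 < r)%N -> (r < size I)%N ->
    ~ is_alpha_seg eG eH w alpha xs t (merge_segs I l r).

(* edge relation of H' = H \cup E_alpha(S, H): the edges {x_{i_j}, x_{i_{j+1}}}
   of unit-length segments with dist_H > alpha * w(e). *)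
Definition Ealpha (T : finType) (R : realType) (eH : rel T) (w : T -> T -> R)
    (alpha : R) (xs : nat -> T) (I : seq nat) : rel T :=
  fun u v => has (fun j =>
      let a := xs (nth 0%N I j) in let b := xs (nth 0%N I j.+1) in
      [&& nth 0%N I j.+1 == (nth 0%N I j).+1,
          ((u == a) && (v == b)) || ((u == b) && (v == a)) &
          (alpha%:E * (w a b)%:E < dist eH w a b)%E])
    (iota 0 (size I).-1).

Definition Hunion (T : finType) (R : realType) (eH : rel T) (w : T -> T -> R)
    (alpha : R) (xs : nat -> T) (I : seq nat) : rel T :=
  fun u v => eH u v || Ealpha eH w alpha xs I u v.

(* Main.v *)
Require Import Defs.
From HB Require Import structures.
From mathcomp Require Import all_boot all_order all_algebra.
From mathcomp Require Import boolp classical_sets reals constructive_ereal ereal.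
From mathcomp Require Import lra zify.
From Stdlib Require Import Lia.
Set Implicit Arguments.
Unset Strict Implicit.
Import Order.TTheory GRing.Theory Num.Theory.
Local Open Scope ring_scope.

Lemma wweight_cat (T : Type) (R : numDomainType) (w : T -> T -> R) u p q :
  wweight w u (p ++ q) = wweight w u p + wweight w (last u p) q.
Proof. by elim: p u => [|v p IH] u /=; rewrite ?add0r // IH addrA. Qed.

Lemma dist_le (T : eqType) (R : realType) (e : rel T) (w : T -> T -> R) u v p :
  path e u p -> last u p = v -> (dist e w u v <= (wweight w u p)%:E)%E.
Proof. by move=> hp hl; apply: ge_ereal_inf; exists (wweight w u p)%:E => //; exists p. Qed.

Lemma dist_mono (T : eqType) (R : realType) (e1 e2 : rel T) (w : T -> T -> R) u v :
  subrel e1 e2 -> (dist e2 w u v <= dist e1 w u v)%E.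
Proof.
move=> sub; apply: ereal_inf_le_tmp => _ [p [hp hl] <-]; exists p => //; split => //.
exact: sub_path hp.
Qed.

Lemma dist_tri (T : eqType) (R : realType) (e : rel T) (w : T -> T -> R) u v z a b :
  (dist e w u v <= a%:E)%E -> (dist e w v z <= b%:E)%E -> (dist e w u z <= (a+b)%:E)%E.
Proof.
move=> h1 h2; apply/lee_addgt0Pr => eps eps0.
have e2 : 0 < eps / 2 by rewrite divr_gt0.
have /ereal_inf_lt [_ [p1 [hp1 hl1] <-]] : (dist e w u v < (a + eps/2)%:E)%E.
  by apply: (le_lt_trans h1); rewrite lte_fin ltrDl.
have /ereal_inf_lt [_ [p2 [hp2 hl2] <-]] : (dist e w v z < (b + eps/2)%:E)%E.
  by apply: (le_lt_trans h2); rewrite lte_fin ltrDl.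
rewrite !lte_fin => l1 l2.
apply: le_trans (@dist_le _ _ e w u z (p1 ++ p2) _ _) _.
- by rewrite cat_path hp1 hl1.
- by rewrite last_cat hl1.
rewrite -EFinD lee_fin wweight_cat hl1. lra.
Qed.

Section Seg.
Variables (T : eqType) (R : realType) (e : rel T) (w : T -> T -> R) (xs : nat -> T).

Definition seg a n := map xs (iota a.+1 n).
Definition sub a b := wweight w (xs a) (seg a (b - a)).

Lemma last_seg a n : last (xs a) (seg a n) = xs (a + n).
Proof.
rewrite /seg last_map; congr xs.
elim: n a => [|n IH] a /=; first by rewrite addn0.
by rewrite IH addSnnS.
Qed.

Lemma seg_cat a n m : seg a (n + m) = seg a n ++ seg (a + n) m.
Proof. by rewrite /seg iotaD map_cat addSn. Qed.

Lemma sub_add a b c : (a <= b)%N -> (b <= c)%N -> sub a c = sub a b + sub b c.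
Proof.
move=> ab bc; rewrite /sub.
have -> : (c - a = (b - a) + (c - b))%N by lia.
by rewrite seg_cat wweight_cat last_seg subnKC.
Qed.

Lemma path_sub t a b : path e (xs 0) (seg 0 t) -> (a <= b)%N -> (b <= t)%N ->
  path e (xs a) (seg a (b - a)).
Proof.
move=> hp ab bt.
have ht : t = (a + ((b - a) + (t - b)))%N by lia.
move: hp; rewrite ht seg_cat add0n seg_cat cat_path last_seg add0n.
by case/andP=> _; rewrite cat_path => /andP[].
Qed.

Lemma sub_le_dist t a b : path e (xs 0) (seg 0 t) ->
  (wweight w (xs 0) (seg 0 t))%:E = dist e w (xs 0) (xs t) ->
  (a <= b)%N -> (b <= t)%N -> ((sub a b)%:E <= dist e w (xs a) (xs b))%E.
Proof.
move=> hp hd ab bt; apply/ereal_infP => _ [p [pp pl] <-].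
have ht : t = (a + ((b - a) + (t - b)))%N by lia.
have hpa : path e (xs 0) (seg 0 a).
  by have := @path_sub t 0 a hp (leq0n a) (leq_trans ab bt); rewrite subn0.
have hpb : path e (xs b) (seg b (t - b)) by apply: (@path_sub t b t hp).
have := @dist_le _ _ e w (xs 0) (xs t) (seg 0 a ++ p ++ seg b (t - b)).
rewrite !cat_path !last_cat last_seg add0n pp pl hpa hpb last_seg subnKC //.
move=> /(_ isT erefl); rewrite -hd lee_fin !wweight_cat last_seg add0n pl.
have := @sub_add 0 a b (leq0n a) ab; have := @sub_add 0 b t (leq0n b) bt.
have := @sub_add 0 a t (leq0n a) (leq_trans ab bt).
rewrite /sub !subn0 lee_fin => -> -> ->. lra.
Qed.
End Seg.
Theorem lemma3p1 (R : realType) (T : finType) (eG eH : rel T)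
    (w : T -> T -> R) (alpha beta : R) (xs : nat -> T) (t : nat) (I : seq nat) :
  (* G is an undirected (simple) graph with positive edge weights *)
  symmetric eG -> irreflexive eG ->
  (forall u v, eG u v -> w u v = w v u) ->
  (forall u v, eG u v -> 0 < w u v) ->
  (* every edge is a shortest path between its endpoints *)
  (forall u v, eG u v -> dist eG w u v = (w u v)%:E) ->
  (* H is a subgraph of G *)
  symmetric eH -> subrel eH eG ->
  1 <= alpha -> 0 <= beta ->
  (* (x, y) = (x_0, x_t) violates the (alpha, beta) condition in H *)
  (alpha%:E * dist eG w (xs 0%N) (xs t) + (beta * Wmax eG w)%:E
     < dist eH w (xs 0%N) (xs t))%E ->
  (* P = (x_0, ..., x_t) is a shortest x-y path in G *)
  path eG (xs 0%N) (map xs (iota 1 t)) ->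
  (wweight w (xs 0%N) (map xs (iota 1 t)))%:E = dist eG w (xs 0%N) (xs t) ->
  (* I is a minimal alpha-segmentation of P w.r.t. H *)
  is_minimal_alpha_seg eG eH w alpha xs t I ->
  forall l r, (l < r)%N -> (r <= (size I).-1)%N ->
    (dist (Hunion eH w alpha xs I) w (xs (nth 0%N I l)) (xs (nth 0%N I r))
      <= alpha%:E * dist eG w (xs (nth 0%N I l)) (xs (nth 0%N I r)))%E.
Proof.
move=> _ _ _ wpos edist _ subH a1 _ _ hp hw [[I0 I00 Ilast Isort Iseg] _] l r lr rs.
have a0 : 0 <= alpha by lra.
set s := (size I).-1 in rs.
have szI : (0 < size I)%N by case: I I0 {s rs Iseg Isort Ilast I00}.
have ltsz k : (k <= s)%N -> (k < size I)%N by rewrite /s; lia.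
have mono j k : (j < k)%N -> (k <= s)%N -> (nth 0%N I j < nth 0%N I k)%N.
  move=> jk ks; apply: (sorted_ltn_nth ltn_trans) => //; rewrite inE ltsz //.
  exact: leq_trans (ltnW jk) ks.
have Is : nth 0%N I s = t by rewrite /s nth_last.
have bnd k : (k <= s)%N -> (nth 0%N I k <= t)%N.
  move=> ks; case: (ltngtP k s) ks => // [ks _|-> _]; last by rewrite Is.
  by rewrite -Is ltnW // mono.
have hp' : path eG (xs 0%N) (seg xs 0 t) by [].
have hw' : (wweight w (xs 0%N) (seg xs 0 t))%:E = dist eG w (xs 0%N) (xs t) by [].
set H' := Hunion eH w alpha xs I.
have subH' : subrel eH H' by move=> u v h; rewrite /H' /Hunion h.
have one j : (j < s)%N -> (dist H' w (xs (nth 0%N I j)) (xs (nth 0%N I j.+1))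
    <= (alpha * sub w xs (nth 0%N I j) (nth 0%N I j.+1))%:E)%E.
  move=> js.
  have ab := mono j j.+1 (ltnSn j) js.
  have bt := bnd j.+1 js.
  set a := nth 0%N I j in ab bt *; set b := nth 0%N I j.+1 in ab bt *.
  have pab := path_sub hp' (ltnW ab) bt.
  case: (leqP (a + 2) b) => hab.
    apply: le_trans (dist_mono _ _ _ subH') _.
    apply: le_trans (Iseg j (ltsz _ js) hab) _.
    rewrite EFinM; apply: lee_wpmul2l; first by rewrite lee_fin.
    by rewrite /sub; apply: dist_le pab _; rewrite last_seg subnKC // ltnW.
  have eb : b = a.+1 by lia.
  have sab : sub w xs a b = w (xs a) (xs b) + 0.
    by rewrite /sub (_ : (b - a = 1)%N) /seg /= -?eb ?addr0 //; lia.
  have eab : eG (xs a) (xs b).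
    by move: pab; rewrite (_ : (b - a = 1)%N) /seg /= -?eb ?andbT //; lia.
  rewrite sab addr0.
  case hlt: (alpha%:E * (w (xs a) (xs b))%:E < dist eH w (xs a) (xs b))%E; last first.
    move/negbT: hlt; rewrite -leNgt => hle.
    apply: le_trans (dist_mono _ _ _ subH') _.
    by rewrite EFinM.
    apply: le_trans (@dist_le _ _ H' w (xs a) (xs b) [:: xs b] _ erefl) _.
      rewrite /= andbT /H' /Hunion; apply/orP; right.
      apply/hasP; exists j; first by rewrite mem_iota add0n.
      rewrite -/a -/b.
      by rewrite /= -eb !eqxx hlt.
  have := wpos _ _ eab; rewrite /= addr0 lee_fin => wp. nra.
have ind n : (l + n.+1 <= s)%N -> (dist H' w (xs (nth 0%N I l)) (xs (nth 0%N I (l + n.+1)))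
    <= (alpha * sub w xs (nth 0%N I l) (nth 0%N I (l + n.+1)))%:E)%E.
  elim: n => [|n IH] hn; first by rewrite addn1; apply: one; rewrite -addn1.
  have h1 := IH (ltac:(lia)).
  have h2 := one (l + n.+1)%N (ltac:(lia)).
  rewrite addnS; apply: le_trans (dist_tri h1 h2) _.
  rewrite -mulrDr -sub_add //; apply: ltnW; apply: mono; lia.
have er : r = (l + (r - l).-1.+1)%N by lia.
rewrite er; apply: le_trans (ind _ _) _; first by rewrite -er.
rewrite EFinM; apply: lee_wpmul2l; first by rewrite lee_fin.
apply: (sub_le_dist hp' hw'); last by apply: bnd; rewrite -er.
by rewrite -er ltnW // mono.
Qed.
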